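(* Let $X$ be a completely subscalable nonnegative random variable with survival function $\overline{F}(x) = \mathbb{P}(X>x)$. Then $\overline{F}$ is continuous on $(0, \infty)$.
   Context: A nonnegative random variable $X$ with survival function $\overline{F}$ is called completely subscalable if $\theta \, \overline{F}(x) \leq \overline{F}(x/\theta)$ for all $x \geq 0$ and all $\theta \in (0,1)$. *)

(* Defs.v *)
From HB Require Import structures.
From mathcomp Require Import all_boot all_order all_algebra.
From mathcomp Require Import all_classical all_reals all_analysis.
Set Implicit Arguments. Unset Strict Implicit. Unset Printing Implicit Defensive.
Import Order.TTheory GRing.Theory Num.Theory.
Local Open Scope ring_scope.

(* Survival function  Fbar(x) = P(X > x), real-valued (ccdf is finite). *)
Definition survival d (T : measurableType d) (R : realType)
  (P : probability T R) (X : {RV P >-> R}) (x : R) : R := fine (ccdf X x).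

Definition completely_subscalable d (T : measurableType d) (R : realType)
  (P : probability T R) (X : {RV P >-> R}) : Prop :=
  forall (x theta : R), 0 <= x -> 0 < theta -> theta < 1 ->
    theta * survival X x <= survival X (x / theta).

(* Main.v *)
Require Import Defs.
From HB Require Import structures.
From mathcomp Require Import all_boot all_order all_algebra.
From mathcomp Require Import all_classical all_reals all_analysis.
From mathcomp Require Import lra ring.
Import Order.TTheory GRing.Theory Num.Theory.
Import numFieldTopology.Exports numFieldNormedType.Exports.
Local Open Scope ring_scope.

Lemma surv01 d (T : measurableType d) (R : realType)
  (P : probability T R) (X : {RV P >-> R}) x :
  0 <= survival X x <= 1.
Proof.
rewrite /survival /ccdf.
have h0 := measure_ge0 (distribution P X) `]x, +oo[.
have h1 := probability_le1 (distribution P X) (measurable_itv `]x, +oo[).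
have hf : (distribution P X `]x, +oo[)%E \is a fin_num by rewrite fin_num_measure.
apply/andP; split; first by rewrite fine_ge0.
by rewrite -lee_fin fineK.
Qed.

Lemma survmono d (T : measurableType d) (R : realType)
  (P : probability T R) (X : {RV P >-> R}) x y :
  x <= y -> survival X y <= survival X x.
Proof.
move=> xy; rewrite /survival; apply: fine_le; rewrite ?fin_num_measure//.
exact: ccdf_nonincreasing.
Qed.

Arguments surv01 {d T R P} X x.
Arguments survmono {d T R P} X {x y}.

Theorem lemma7 (d : measure_display) (T : measurableType d) (R : realType)
  (P : probability T R) (X : {RV P >-> R}) :
  (forall w, 0 <= X w) ->
  completely_subscalable X ->
  forall x : R, 0 < x -> {for x, continuous (survival X)}.
Proof.
move=> _ HS x x0.
apply/cvgrPdist_le => e e0.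
have d0 : 0 < Num.min (x/2) (e*x/2).
  by rewrite lt_min; apply/andP; split; [lra|nra].
exists (Num.min (x/2) (e*x/2)) => //= y /=.
rewrite lt_min => /andP[h1 h2].
move: h1 h2; rewrite !ltr_norml => /andP[h1 h1'] /andP[h2 h2'].
have := surv01 X x; have := surv01 X y.
move=> /andP[t0 t1] /andP[s0 s1].
have y0 : 0 < y by lra.
have [yx|xy] := leP y x.
  have ms := survmono X yx.
  have key : y * survival X y <= x * survival X x.
    have [->|ylt] := eqVneq y x; first by [].
    have ylt' : y < x by rewrite lt_neqAle ylt yx.
    have := HS y (y / x) (ltW y0) _ _.
    rewrite (_ : y / (y / x) = x); last by field; lra.
    move=> /(_ _ _) H.
    have H' := H (divr_gt0 y0 x0) _.
    have : y / x < 1 by rewrite ltr_pdivrMr //; lra.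
    move=> /H' {}H.
    rewrite -(ler_pM2l x0) in H.
    have e1 : x * (y / x * survival X y) = y * survival X y by field; lra.
    by rewrite e1 in H.
  rewrite ler_norml; apply/andP; split; nra.
have ms := survmono X (ltW xy).
have key : x * survival X x <= y * survival X y.
  have := HS x (x / y) (ltW x0) (divr_gt0 x0 y0).
  rewrite (_ : x / (x / y) = y); last by field; lra.
  have : x / y < 1 by rewrite ltr_pdivrMr //; lra.
  move=> h /(_ h) H.
  rewrite -(ler_pM2l y0) in H.
  have e1 : y * (x / y * survival X x) = x * survival X x by field; lra.
  by rewrite e1 in H.
rewrite ler_norml; apply/andP; split; nra.
Qed.
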